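(* Let $\alpha$ be an algebraic number of degree $3$ such that $\mathbb Q(\alpha)/\mathbb Q$ is not a Galois extension. Let $\alpha_1=\alpha,\alpha_2,\alpha_3$ be the conjugates of $\alpha$ over $\mathbb Q$, and assume that the field $\mathbb Q(\alpha_1,\alpha_2,\alpha_3)$ contains no primitive cube root of unity. If $\xi_1,\xi_2,\xi_3$ are roots of unity with $\alpha_1\xi_1+\alpha_2\xi_2+\alpha_3\xi_3=0$, then $\xi_1=\xi_2=\xi_3$, and consequently $\alpha_1+\alpha_2+\alpha_3=0$. *)

(* Defs.v *)
From mathcomp Require Import all_boot all_algebra algC.
Set Implicit Arguments. Unset Strict Implicit. Unset Printing Implicit Defensive.
Import GRing.Theory Num.Theory.
Local Open Scope ring_scope.

Definition is_subfield (S : algC -> Prop) : Prop :=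
  [/\ S 0, S 1,
      (forall x y, S x -> S y -> S (x - y)),
      (forall x y, S x -> S y -> S (x * y)) &
      (forall x, S x -> S x^-1)].

(* The field Q(s) generated over Q by the finite list s: the smallest subfield
   of algC containing all elements of s (every subfield contains Q). *)
Definition genfield (s : seq algC) (x : algC) : Prop :=
  forall S : algC -> Prop, is_subfield S -> (forall a, a \in s -> S a) -> S x.

(* In characteristic 0, a finite extension is Galois iff it is normal. *)
Definition normal_over_Q (K : algC -> Prop) : Prop :=
  forall x, K x -> forall q : {poly rat}, irreducible_poly q ->
    root (map_poly ratr q) x ->
    forall y, root (map_poly ratr q) y -> K y.

Definition is_root_of_unity (z : algC) : Prop := exists n : nat, (0 < n)%N /\ z ^+ n = 1.

(* Main.v *)
From HB Require Import structures.
Require Import Defs.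
From mathcomp Require Import all_boot all_algebra all_field.
From mathcomp Require Import ring.
Import GRing.Theory Num.Theory.
From Stdlib Require Import Classical.
Import GRing.Theory Num.Theory.
Local Open Scope ring_scope.

Lemma aut_exists x y : root (minCpoly x) y ->
  exists nu : {rmorphism algC -> algC}, nu x = y.
Proof.
move=> ry.
have [rs Drs] := closed_field_poly_normal (minCpoly x).
rewrite (monicP (minCpoly_monic x)) scale1r in Drs.
have xrs : x \in rs by rewrite -root_prod_XsubC -Drs root_minCpoly.
have yrs : y \in rs by rewrite -root_prod_XsubC -Drs.
have [Qs [QsC [s1 Ds1 gen]]] := num_field_exists rs.
have [xs xs1 Dx] : exists2 xs, xs \in s1 & x = QsC xs.
  by apply/mapP; rewrite Ds1.
have [ys ys1 Dy] : exists2 ys, ys \in s1 & y = QsC ys.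
  by apply/mapP; rewrite Ds1.
have [q [Dq _] min_q] := minCpolyP x.
have homQs1: kHom 1 1 (\1%VF : 'End(Qs)) by rewrite kHom1.
have pxs_ys: root (map_poly \1%VF (minPoly 1 xs)) ys.
  rewrite -(fmorph_root QsC) -map_poly_comp.
  rewrite (@eq_map_poly _ _ _ QsC) => [|a]; last by rewrite /= id_lfunE.
  set p1 := map_poly _ _.
  have [q1 Dp1]: exists q1, p1 = map_poly (ratr : rat -> algC) q1.
    have aP i: (minPoly 1 xs)`_i \in 1%VS.
      by apply/polyOverP; apply: minPolyOver.
    have{aP} a_ i := sig_eqW (vlineP _ _ (aP i)).
    exists (\poly_(i < size (minPoly 1 xs)) sval (a_ i)).
    apply/polyP=> i; rewrite coef_poly coef_map coef_poly /=.
    case: ifP => _; rewrite ?rmorph0 //; case: (a_ i) => a /= ->.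
    by rewrite alg_num_field fmorph_rat.
  have: root p1 x by rewrite Dx fmorph_root root_minPoly.
  rewrite Dp1 min_q; case/dvdpP=> r1 ->.
  by rewrite rmorphM rootM /= -Dq -Dy ry orbT.
pose f0 := kHomExtend 1 \1 xs ys.
have homf0 : kHom 1 <<1; xs>> f0 by exact: (kHomExtendP (subvv _) homQs1 pxs_ys).
have f0x : f0 xs = ys by exact: (kHomExtend_val homQs1 pxs_ys).
pose P := map_poly (in_alg Qs) q.
have PQ : P \is a polyOver 1%VS.
  by apply/polyOverP=> i; rewrite coef_map /= rpredZ ?mem1v.
have hsplit : splittingFieldFor <<1; xs>> P fullv.
  exists s1.
    have -> : P = \prod_(z <- s1) ('X - z%:P).
      apply: (map_poly_inj QsC).
      rewrite rmorph_prod /= -map_poly_comp.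
      rewrite (@eq_map_poly _ _ _ (ratr : rat -> algC)) => [|a]; last first.
        by rewrite /= rmorphZ_num rmorph1 mulr1.
      rewrite -Dq Drs -Ds1 big_map; apply: eq_bigr => z _.
      by rewrite rmorphB /= map_polyX map_polyC.
    exact: eqpxx.
  by apply/eqP; rewrite eqEsubv subvf /= -gen adjoin_seqSl ?sub1v.

have [g homg Dg] := kHom_extends (subv_adjoin 1 xs) homf0 PQ hsplit.
have gM : monoid_morphism g by apply/kHom_monoid_morphism.
pose gmM := GRing.isMonoidMorphism.Build _ _ (fun_of_lfun g) gM.
pose gRM : {rmorphism _ -> _} := HB.pack (fun_of_lfun g) gmM.
have [nu Dnu] := extend_algC_subfield_aut QsC gRM.
exists nu; rewrite Dx -Dnu /= -Dg ?memv_adjoin //.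
by rewrite f0x -Dy.
Qed.
Lemma minC_sep x : ~~ root (minCpoly x)^`() x.
Proof.
have [q [Dq monq] minq] := minCpolyP x.
rewrite Dq deriv_map minq; apply/negP => dv.
have sq : (1 < size q)%N by rewrite -(size_map_poly (ratr : rat -> algC)) -Dq size_minCpoly.
have q0 : q != 0 by rewrite -size_poly_gt0 ltnW.
have [d0|nz] := eqVneq q^`() 0; last first.
  by have := dvdp_leq nz dv; rewrite leqNgt lt_size_deriv.
have := congr1 (fun p : {poly rat} => p`_(size q).-2) d0.
have e : ((size q).-2).+1 = (size q).-1 by case: (size q) sq => [|[|n]].
rewrite coef_deriv coef0 e.
move/eqP; rewrite mulrn_eq0 -lead_coefE lead_coef_eq0 (negbTE q0) orbF.
by case: (size q) sq => [|[|n]].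
Qed.

Lemma minC_irr (p : {poly rat}) a : p \is monic -> irreducible_poly p ->
  root (map_poly ratr p) a -> minCpoly a = map_poly ratr p.
Proof.
move=> mp [sp irr] ra.
have [r [Dr monr] minr] := minCpolyP a.
have rp : r %| p by rewrite -minr.
have sr : size r != 1%N.
  by rewrite -(size_map_poly (ratr : rat -> algC)) -Dr neq_ltn size_minCpoly orbT.
have := irr r sr rp; rewrite eqp_monic // => /eqP Erp.
by rewrite Dr Erp.
Qed.

Lemma fixed_rat x : (forall nu : {rmorphism algC -> algC}, nu x = x) -> x \in Crat.
Proof.
move=> fix_x; apply/negPn/negP => nrat.
have [rs Drs] := closed_field_poly_normal (minCpoly x).
rewrite (monicP (minCpoly_monic x)) scale1r in Drs.
have inrs z : z \in rs -> z = x.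
  move=> zrs; have rz : root (minCpoly x) z by rewrite Drs root_prod_XsubC.
  by have [nu <-] := aut_exists x z rz; rewrite fix_x.
case: rs Drs inrs => [|z1 [|z2 rs]] Drs inrs.
- by have := size_minCpoly x; rewrite Drs big_nil size_poly1.
- have ez := inrs z1 (mem_head _ _); rewrite ez big_seq1 in Drs.
  have [q [Dq _] _] := minCpolyP x.
  have := congr1 (fun p : {poly algC} => p`_0) Drs.
  rewrite Dq coef_map coefB coefX coefC /= sub0r => e.
  move/negP: nrat; apply; apply/CratP; exists (- q`_0).
by rewrite raddfN /= e opprK.
- have e1 := inrs z1 (mem_head _ _).
  have e2 : z2 = x by apply: inrs; rewrite !inE eqxx orbT.
  have := minC_sep x; rewrite Drs !big_cons e1 e2.
  rewrite derivM rootE !hornerE subrr.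
by rewrite /= mulr0 !mul0r addr0 eqxx.
Qed.

Definition in3 (a1 a2 a3 x : algC) := x = a1 \/ x = a2 \/ x = a3.

Lemma aut_cases (a1 a2 a3 : algC) (nu : {rmorphism algC -> algC}) :
  a1 != a2 -> a1 != a3 -> a2 != a3 ->
  in3 a1 a2 a3 (nu a1) -> in3 a1 a2 a3 (nu a2) -> in3 a1 a2 a3 (nu a3) ->
  [/\ nu a1 = a1, nu a2 = a2 & nu a3 = a3] \/
  [/\ nu a1 = a1, nu a2 = a3 & nu a3 = a2] \/
  [/\ nu a1 = a2, nu a2 = a1 & nu a3 = a3] \/
  [/\ nu a1 = a2, nu a2 = a3 & nu a3 = a1] \/
  [/\ nu a1 = a3, nu a2 = a1 & nu a3 = a2] \/
  [/\ nu a1 = a3, nu a2 = a2 & nu a3 = a1].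
Proof.
move=> d12 d13 d23 h1 h2 h3.
have i12 : nu a1 != nu a2 by rewrite (inj_eq (fmorph_inj nu)).
have i13 : nu a1 != nu a3 by rewrite (inj_eq (fmorph_inj nu)).
have i23 : nu a2 != nu a3 by rewrite (inj_eq (fmorph_inj nu)).
case: h1 => [e1|[e1|e1]]; case: h2 => [e2|[e2|e2]]; case: h3 => [e3|[e3|e3]];
  move: i12 i13 i23; rewrite ?e1 ?e2 ?e3 ?eqxx // => _ _ _;
  do ?[by left; split | right]; by split.
Qed.


Lemma aut_comm n (nu1 nu2 : {rmorphism algC -> algC}) u :
  (0 < n)%N -> u ^+ n = 1 -> nu1 (nu2 u) = nu2 (nu1 u).
Proof.
move=> n0 un.
have [z pz] := C_prim_root_exists n0.
have hk (nu : {rmorphism algC -> algC}) : exists k, nu z = z ^+ k.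
  have : nu z ^+ n = 1 by rewrite -rmorphXn /= (prim_expr_order pz) rmorph1.
  by case/(prim_rootP pz) => k ->; exists k.
have [k1 E1] := hk nu1; have [k2 E2] := hk nu2.
have [i ->] := prim_rootP pz un.
rewrite !rmorphXn /= E1 E2.
rewrite (rmorphXn nu1) (rmorphXn nu2) E1 E2.
by rewrite -(exprM z k1 k2) -(exprM z k2 k1) mulnC.
Qed.

Lemma sfN S x : is_subfield S -> S x -> S (- x).
Proof. by case=> h0 _ hB _ _ hx; rewrite -sub0r; apply: hB. Qed.
Lemma sfD S x y : is_subfield S -> S x -> S y -> S (x + y).
Proof.
move=> hS hx hy; rewrite -[y]opprK; case: (hS) => _ _ hB _ _.
by apply: hB => //; apply: sfN.
Qed.
Lemma sfM S x y : is_subfield S -> S x -> S y -> S (x * y).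
Proof. by case=> _ _ _ hM _; apply: hM. Qed.
Lemma sfB S x y : is_subfield S -> S x -> S y -> S (x - y).
Proof. by case=> _ _ hB _ _; apply: hB. Qed.
Lemma sfV S x : is_subfield S -> S x -> S x^-1.
Proof. by case=> _ _ _ _ hV; apply: hV. Qed.
Lemma sfdiv S x y : is_subfield S -> S x -> S y -> S (x / y).
Proof. by move=> hS hx hy; apply: sfM => //; apply: sfV. Qed.
Lemma sf_nat S n : is_subfield S -> S n%:R.
Proof.
move=> hS; elim: n => [|n IH]; first by case: hS.
by rewrite mulrS; apply: sfD => //; case: hS.
Qed.
Lemma sf_int S (z : int) : is_subfield S -> S z%:~R.
Proof.
move=> hS; case: z => n.
  have := sf_nat S n hS; rewrite -pmulrn; exact.
by change (S (- n.+1%:R)); apply: sfN => //; apply: sf_nat.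
Qed.
Lemma sf_Crat S x : is_subfield S -> x \in Crat -> S x.
Proof.
move=> hS /CratP[r ->]; rewrite /ratr.
by apply: sfdiv => //; apply: sf_int.
Qed.

Lemma gf_sub s : is_subfield (genfield s).
Proof.
split.
- by move=> S [].
- by move=> S [].
- by move=> x y hx hy S hS hs; apply: sfB => //; [apply: hx | apply: hy].
- by move=> x y hx hy S hS hs; apply: sfM => //; [apply: hx | apply: hy].
- by move=> x hx S hS hs; apply: sfV => //; apply: hx.
Qed.

Lemma gf_mem s a : a \in s -> genfield s a.
Proof. by move=> ha S hS hs; apply: hs. Qed.

Lemma gf_aut s (nu : {rmorphism algC -> algC}) :
  (forall a, a \in s -> genfield s (nu a)) ->
  forall x, genfield s x -> genfield s (nu x).
Proof.
move=> H x gx; apply: (gx (fun z => genfield s (nu z))) => //.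
have hS := gf_sub s.
split.
- by rewrite rmorph0; case: hS.
- by rewrite rmorph1; case: hS.
- by move=> u v hu hv; rewrite rmorphB; exact: (sfB _ _ _ hS).
- by move=> u v hu hv; rewrite rmorphM; exact: (sfM _ _ _ hS).
- by move=> u hu; rewrite fmorphV; exact: (sfV _ _ hS).
Qed.

Lemma deriv3 (u v w z : algC) :
  (('X - u%:P) * ('X - v%:P) * ('X - w%:P))^`().[z] =
  (z - v) * (z - w) + (z - u) * (z - w) + (z - u) * (z - v).
Proof. rewrite !derivM !derivXsubC !hornerE /=; ring. Qed.

Theorem lemma11 (p : {poly rat}) (a1 a2 a3 : algC) :
  (* p is the minimal polynomial of alpha = a1, of degree 3 *)
  p \is monic -> irreducible_poly p -> size p = 4%N ->
  (* a1, a2, a3 are the conjugates of alpha (the roots of p) *)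
  map_poly ratr p = ('X - a1%:P) * ('X - a2%:P) * ('X - a3%:P) ->
  (* Q(alpha)/Q is not Galois *)
  ~ normal_over_Q (genfield [:: a1]) ->
  (* Q(a1,a2,a3) contains no primitive cube root of unity *)
  (forall z : algC, genfield [:: a1; a2; a3] z -> ~ 3.-primitive_root z) ->
  forall xi1 xi2 xi3 : algC,
    is_root_of_unity xi1 -> is_root_of_unity xi2 -> is_root_of_unity xi3 ->
    a1 * xi1 + a2 * xi2 + a3 * xi3 = 0 ->
    (xi1 = xi2 /\ xi2 = xi3) /\ a1 + a2 + a3 = 0.
Proof.
move=> monp irrp sp Hp nonnorm nocube xi1 xi2 xi3
  [n1 [n1p ex1]] [n2 [n2p ex2]] [n3 [n3p ex3]] E1.
have rP x : root (map_poly ratr p) x = [|| x == a1, x == a2 | x == a3].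
  by rewrite Hp !rootM !root_XsubC orbA.
have ra1 : root (map_poly ratr p) a1 by rewrite rP eqxx.
have ra2 : root (map_poly ratr p) a2 by rewrite rP eqxx !orbT.
have ra3 : root (map_poly ratr p) a3 by rewrite rP eqxx !orbT.
have mC x : root (map_poly ratr p) x -> minCpoly x = map_poly ratr p.
  exact: minC_irr.
have d12 : a1 != a2.
  apply/eqP => e; have := minC_sep a1; rewrite (mC a1 ra1) Hp rootE deriv3 -e.
  by rewrite subrr !(mul0r, mulr0, add0r, addr0) eqxx.
have d13 : a1 != a3.
  apply/eqP => e; have := minC_sep a1; rewrite (mC a1 ra1) Hp rootE deriv3 -e.
  by rewrite subrr !(mul0r, mulr0, add0r, addr0) eqxx.
have d23 : a2 != a3.
  apply/eqP => e; have := minC_sep a2; rewrite (mC a2 ra2) Hp rootE deriv3 -e.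
  by rewrite subrr !(mul0r, mulr0, add0r, addr0) eqxx.
have hin (nu : {rmorphism algC -> algC}) x :
    root (map_poly ratr p) x -> in3 a1 a2 a3 (nu x).
  move=> rx.
  have : root (map_poly ratr p) (nu x).
    rewrite -(fmorph_root nu) in rx; move: rx.
    by rewrite -map_poly_comp (eq_map_poly (fmorph_rat nu)).
  rewrite rP => /or3P[] /eqP ->; rewrite /in3; tauto.
have cases nu := aut_cases a1 a2 a3 nu d12 d13 d23 (hin nu a1 ra1) (hin nu a2 ra2) (hin nu a3 ra3).
pose dl := (a1 - a2) * (a1 - a3) * (a2 - a3).
have dnz : dl != 0.
  by rewrite /dl !mulf_neq0 // subr_eq0.
have dimg (nu : {rmorphism algC -> algC}) :
    nu dl = (nu a1 - nu a2) * (nu a1 - nu a3) * (nu a2 - nu a3).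
  by rewrite /dl !rmorphM !rmorphB.
have r12 : root (minCpoly a1) a2 by rewrite mC.
have r13 : root (minCpoly a1) a3 by rewrite mC.
have [s1 Es1] := aut_exists a1 a2 r12.
have [s2 Es2] := aut_exists a1 a3 r13.
have [g [g1 g2 g3]] : exists g : {rmorphism algC -> algC},
    [/\ g a1 = a2, g a2 = a3 & g a3 = a1].
  case: (cases s1) => [[e1 _ _]|[[e1 _ _]|[[e1 e2 e3]|[[e1 e2 e3]|[[e1 _ _]|[e1 _ _]]]]]];
    rewrite ?Es1 in e1; try by [move: d12; rewrite e1 eqxx | move: d23; rewrite e1 eqxx].
  - case: (cases s2) => [[f1 _ _]|[[f1 _ _]|[[f1 _ _]|[[f1 _ _]|[[f1 f2 f3]|[f1 f2 f3]]]]]];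
      rewrite ?Es2 in f1; try by [move: d13; rewrite f1 eqxx | move: d23; rewrite f1 eqxx].
    + by exists (s2 \o s2)%FUN; rewrite /= Es2 f3 f2.
    + by exists (s2 \o s1)%FUN; rewrite /= Es1 e2 e3 Es2 f2 f3.
  - by exists s1; rewrite Es1.
have fixS (nu : {rmorphism algC -> algC}) : nu (a1 + a2 + a3) = a1 + a2 + a3.
  rewrite !rmorphD.
  case: (cases nu) => [[-> -> ->]|[[-> -> ->]|[[-> -> ->]|[[-> -> ->]|[[-> -> ->]|[-> -> ->]]]]]]; ring.
have fixE (nu : {rmorphism algC -> algC}) : nu (a1 * a2 + a1 * a3 + a2 * a3) = a1 * a2 + a1 * a3 + a2 * a3.
  rewrite !rmorphD !rmorphM.
  case: (cases nu) => [[-> -> ->]|[[-> -> ->]|[[-> -> ->]|[[-> -> ->]|[[-> -> ->]|[-> -> ->]]]]]]; ring.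
have [t tdl] : exists t : {rmorphism algC -> algC}, t dl != dl.
  apply: NNPP => hno.
  have hfix (nu : {rmorphism algC -> algC}) : nu dl = dl.
    by case: (eqVneq (nu dl) dl) => // h; exfalso; apply: hno; exists nu.
  have Qd := fixed_rat dl hfix.
  have Qs := fixed_rat _ fixS.
  have Qe := fixed_rat _ fixE.
  have gen23 S : is_subfield S -> S a1 -> S a2 /\ S a3.
    move=> hS h1.
    have Ss := sf_Crat _ _ hS Qs.
    have Se := sf_Crat _ _ hS Qe.
    have Sd := sf_Crat _ _ hS Qd.
    set s := a1 + a2 + a3 in Ss; set e := a1 * a2 + a1 * a3 + a2 * a3 in Se.
    pose D := (a1 - a2) * (a1 - a3).
    have ED : D = a1 * a1 - a1 * (s - a1) + (e - a1 * (s - a1)).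
      by rewrite /D /s /e; ring.
    have SD : S D.
      by rewrite ED; repeat first [assumption | apply: sfD | apply: sfB | apply: sfM | apply: sfN].
    have Dnz : D != 0 by rewrite /D mulf_neq0 // subr_eq0.
    have two : (2 : algC) != 0 by rewrite pnatr_eq0.
    have SA : S (((s - a1) + dl / D) / 2).
      repeat first [assumption | apply: sfD | apply: sfB | apply: sfM | apply: sfN | apply: sfV | apply: sf_nat | by case: hS].
    have SB : S (((s - a1) - dl / D) / 2).
      repeat first [assumption | apply: sfD | apply: sfB | apply: sfM | apply: sfN | apply: sfV | apply: sf_nat | by case: hS].
    have E2 : a2 = ((s - a1) + dl / D) / 2.
      rewrite /s /dl -/D; field; done.
    have E3 : a3 = ((s - a1) - dl / D) / 2.
      rewrite /s /dl -/D; field; done.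
    by split; [rewrite E2 | rewrite E3].
  apply: nonnorm => x gx q irrq rqx y rqy.
  have [r [Dr monr] minr] := minCpolyP x.
  have rq : r %| q by rewrite -minr.
  have sr : size r != 1%N.
    by rewrite -(size_map_poly (ratr : rat -> algC)) -Dr neq_ltn size_minCpoly orbT.
  have eqrq : r %= q := irrq.2 r sr rq.
  have ry : root (minCpoly x) y.
    case/andP: eqrq => _ /dvdpP[k Ek].
    by rewrite Dr Ek rmorphM rootM /= rqy orbT.
  have [nu <-] := aut_exists x y ry.
  apply: gf_aut gx => a; rewrite inE => /eqP ->.
  have h1 : genfield [:: a1] a1 by apply: gf_mem; rewrite inE.
  have h2 : genfield [:: a1] a2.
    by move=> S hS hs; have [] := gen23 S hS (hs a1 (mem_head _ _)).
  have h3 : genfield [:: a1] a3.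
    by move=> S hS hs; have [] := gen23 S hS (hs a1 (mem_head _ _)).
  by case: (hin nu a1 ra1) => [->|[->|->]].
have tcase : [/\ t a1 = a1, t a2 = a3 & t a3 = a2] \/
    [/\ t a1 = a2, t a2 = a1 & t a3 = a3] \/
    [/\ t a1 = a3, t a2 = a2 & t a3 = a1].
  move: tdl; rewrite dimg.
  case: (cases t) => [[-> -> ->]|[[-> -> ->]|[[-> -> ->]|[[-> -> ->]|[[-> -> ->]|[-> -> ->]]]]]];
  first [move/eqP=> h; exfalso; apply: h; rewrite /dl; ring
        | move=> _; do ?[by left; split | right]; by split].
pose n := (n1 * n2 * n3)%N.
have n0 : (0 < n)%N by rewrite /n !muln_gt0 n1p n2p n3p.
have x1n : xi1 ^+ n = 1 by rewrite /n -mulnA exprM ex1 expr1n.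
have x2n : xi2 ^+ n = 1 by rewrite /n (mulnC n1) -mulnA exprM ex2 expr1n.
have x3n : xi3 ^+ n = 1 by rewrite /n mulnC exprM ex3 expr1n.
pose w z := t (g (algC_invaut t (algC_invaut g z))).
have wD x y : w (x + y) = w x + w y by rewrite /w !rmorphD.
have wM x y : w (x * y) = w x * w y by rewrite /w !rmorphM.
have w0 : w 0 = 0 by rewrite /w !rmorph0.
have wxi u : u ^+ n = 1 -> w u = u.
  move=> un; rewrite /w.
  set v := algC_invaut t (algC_invaut g u).
  have vn : v ^+ n = 1 by rewrite /v -!rmorphXn un !rmorph1.
  by rewrite (aut_comm n t g v n0 vn) /v !algC_invautK.
have ig1 : algC_invaut g a2 = a1 by rewrite -g1 algC_autK.
have ig2 : algC_invaut g a3 = a2 by rewrite -g2 algC_autK.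
have ig3 : algC_invaut g a1 = a3 by rewrite -g3 algC_autK.
have iT x y : t x = y -> algC_invaut t y = x by move=> <-; rewrite algC_autK.
have [w1 w2 w3] : [/\ w a1 = a2, w a2 = a3 & w a3 = a1].
  case: tcase => [[t1 t2 t3]|[[t1 t2 t3]|[t1 t2 t3]]];
  by rewrite /w !(ig1, ig2, ig3, iT _ _ t1, iT _ _ t2, iT _ _ t3, g1, g2, g3, t1, t2, t3).
have E2 : a2 * xi1 + a3 * xi2 + a1 * xi3 = 0.
  have := congr1 w E1.
  by rewrite !wD !wM w1 w2 w3 (wxi _ x1n) (wxi _ x2n) (wxi _ x3n) w0.
have E3 : a3 * xi1 + a1 * xi2 + a2 * xi3 = 0.
  have := congr1 w E2.
  by rewrite !wD !wM w1 w2 w3 (wxi _ x1n) (wxi _ x2n) (wxi _ x3n) w0.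
have [om pom] := C_prim_root_exists (isT : (0 < 3)%N).
have om3 : om ^+ 3 = 1 := prim_expr_order pom.
have om1 : om != 1.
  by have := eq_prim_root_expr pom 1 0; rewrite expr1 expr0 => ->.
have sum0 : 1 + om + om ^+ 2 = 0.
  have : (om - 1) * (1 + om + om ^+ 2) = 0.
    rewrite (_ : (om - 1) * (1 + om + om ^+ 2) = om ^+ 3 - 1); last by ring.
    by rewrite om3 subrr.
  move/eqP; rewrite mulf_eq0 => /orP[|/eqP //].
  by rewrite subr_eq0 (negbTE om1).
have key mu : mu ^+ 3 = 1 ->
    (xi1 + mu * xi2 + mu ^+ 2 * xi3) * (a1 + mu ^+ 2 * a2 + mu * a3) = 0.
  move=> m3.
  have -> : (xi1 + mu * xi2 + mu ^+ 2 * xi3) * (a1 + mu ^+ 2 * a2 + mu * a3) =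
     (a1 * xi1 + a2 * xi2 + a3 * xi3) + mu ^+ 2 * (a2 * xi1 + a3 * xi2 + a1 * xi3)
     + mu * (a3 * xi1 + a1 * xi2 + a2 * xi3)
     + (mu ^+ 3 - 1) * (a2 * xi2 + mu * a2 * xi3 + a3 * xi3).
    ring.
  by rewrite E1 E2 E3 m3 subrr !(mulr0, mul0r, addr0).
have o4 : (om ^+ 2) ^+ 2 = om.
  by rewrite -exprM (_ : (2 * 2 = 3 + 1)%N) // exprD om3 mul1r expr1.
have o23 : (om ^+ 2) ^+ 3 = 1 by rewrite -exprM mulnC exprM om3 expr1n.
have gfq x y z : x \in [:: a1; a2; a3] -> y \in [:: a1; a2; a3] ->
    z \in [:: a1; a2; a3] -> genfield [:: a1; a2; a3] ((x - y) / (z - x)).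
  move=> hx hy hz S hS hs; have := hs x hx; have := hs y hy; have := hs z hz.
  move=> Sz Sy Sx.
  by apply: sfM => //; [apply: sfB | apply: sfV => //; apply: sfB].
have L1 : xi1 + om * xi2 + om ^+ 2 * xi3 = 0.
  have := key om om3; move/eqP; rewrite mulf_eq0 => /orP[/eqP // | /eqP T1].
  exfalso.
  have h : om * (a3 - a2) = a2 - a1.
    apply/eqP; rewrite -subr_eq0.
    rewrite (_ : om * (a3 - a2) - (a2 - a1) =
       (a1 + om ^+ 2 * a2 + om * a3) - (1 + om + om ^+ 2) * a2); last by ring.
    by rewrite T1 sum0 mul0r subrr.
  have Eom : om = (a2 - a1) / (a3 - a2).
    by rewrite -h mulfK // subr_eq0 eq_sym.
  apply: (nocube ((a2 - a1) / (a3 - a2))); last by rewrite -Eom.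
  by apply: gfq; rewrite !inE eqxx ?orbT.
have L2 : xi1 + om ^+ 2 * xi2 + om * xi3 = 0.
  have := key (om ^+ 2) o23; rewrite o4.
  move/eqP; rewrite mulf_eq0 => /orP[/eqP // | /eqP T2].
  exfalso.
  have h : om * (a2 - a3) = a3 - a1.
    apply/eqP; rewrite -subr_eq0.
    rewrite (_ : om * (a2 - a3) - (a3 - a1) =
       (a1 + om * a2 + om ^+ 2 * a3) - (1 + om + om ^+ 2) * a3); last by ring.
    by rewrite T2 sum0 mul0r subrr.
  have Eom : om = (a3 - a1) / (a2 - a3).
    by rewrite -h mulfK // subr_eq0.
  apply: (nocube ((a3 - a1) / (a2 - a3))); last by rewrite -Eom.
  by apply: gfq; rewrite !inE eqxx ?orbT.
have e23 : xi2 = xi3.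
  have : (om - om ^+ 2) * (xi2 - xi3) = 0.
    rewrite (_ : (om - om ^+ 2) * (xi2 - xi3) =
      (xi1 + om * xi2 + om ^+ 2 * xi3) - (xi1 + om ^+ 2 * xi2 + om * xi3)); last by ring.
    by rewrite L1 L2 subrr.
  move/eqP; rewrite mulf_eq0 => /orP[|/eqP/subr0_eq //].
  rewrite (_ : om - om ^+ 2 = om * (1 - om)); last by ring.
  rewrite mulf_eq0 subr_eq0 [1 == om]eq_sym (negbTE om1) orbF => /eqP om0.
  by move: om3; rewrite om0 expr0n => /eqP; rewrite eq_sym oner_eq0.
have e12 : xi1 = xi2.
  apply/eqP; rewrite -subr_eq0; apply/eqP.
  rewrite (_ : xi1 - xi2 = (xi1 + om * xi2 + om ^+ 2 * xi3) - (1 + om + om ^+ 2) * xi2); last first.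
    by rewrite -e23; ring.
  by rewrite L1 sum0 mul0r subrr.
split; first by [].
have x10 : xi1 != 0.
  apply/eqP => z; move: ex1; rewrite z expr0n.
  rewrite (negbTE (lt0n_neq0 n1p)) => /eqP; by rewrite eq_sym oner_eq0.
rewrite -e23 -e12 in E1.
have : (a1 + a2 + a3) * xi1 = 0 by rewrite -E1; ring.
by move/eqP; rewrite mulf_eq0 (negbTE x10) orbF => /eqP.
Qed.
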